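(* Let $H=\sum_{i=1}^N c_iP_i$ be a Pauli Hamiltonian, $|\psi\rangle$ a state, $\mathcal{G}=(G^{[1]},\dots,G^{[m]})$ a grouping of $H$ and $\mathcal{R}=(G'^{[1]},\dots,G'^{[m]})$ a repacking of $\mathcal{G}$. Assume that $\sigma_{P_iP_k}=0$ for all distinct commuting $P_i,P_k\in\mathrm{supp}(H)$. Fix positive integer shot counts $M_1,\dots,M_m$ such that both $G^{[j]}$ and $G'^{[j]}$ are measured $M_j$ times. Let $\overline{E}_{\mathcal{G}}$ and $\overline{E}_{\mathcal{R}}$ be the shot-weighted averaging energy estimators for $\mathcal{G}$ and $\mathcal{R}$. If there exist $j$ and $P_s\in G'^{[j]}\setminus G^{[j]}$ with $\sigma^2_{P_s}>0$, then $\mathrm{Var}(\overline{E}_{\mathcal{R}})<\mathrm{Var}(\overline{E}_{\mathcal{G}})$.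
   Context: A Pauli Hamiltonian is $H=\sum_{i=1}^N c_iP_i$ with real nonzero $c_i$ and distinct $n$-qubit Pauli strings $P_i$; $\mathrm{supp}(H)=\{P_1,\dots,P_N\}$. For a state $|\psi\rangle$, $\langle P\rangle=\langle\psi|P|\psi\rangle$, $\sigma_P^2=1-\langle P\rangle^2$, and for commuting $P,Q$, $\sigma_{PQ}=\langle PQ\rangle-\langle P\rangle\langle Q\rangle$. A grouping is a list $(G^{[1]},\dots,G^{[m]})$ of pairwise disjoint sets of mutually commuting operators from $\mathrm{supp}(H)$ whose union is $\mathrm{supp}(H)$; an overlapped grouping drops disjointness. A repacking of a grouping $(G^{[1]},\dots,G^{[m]})$ is an overlapped grouping $(G'^{[1]},\dots,G'^{[m]})$ with $G^{[j]}\subseteq G'^{[j]}$ for all $j$. Measurement model: group $j$ is measured in $M_j$ independent shots, each shot giving simultaneous $\pm1$ outcomes of all operators in the group (single-shot outcome of $P$ has mean $\langle P\rangle$, variance $\sigma_P^2$; two operators in the same group have single-shot covariance $\sigma_{PQ}$); different groups use independent shots. With $\Gamma(i)=\{j:P_i\in \text{group } j\}$ and $\overline{\langle P_i\rangle}_{(j)}$ the sample mean of $P_i$ over group $j$'s shots, the shot-weighted averaging estimator is $\overline{E}=\sum_ic_i\sum_{j\in\Gamma(i)}\frac{M_j}{\sum_{k\in\Gamma(i)}M_k}\overline{\langle P_i\rangle}_{(j)}$. *)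

(* Defs.v *)
From HB Require Import structures.
From mathcomp Require Import all_boot all_order all_algebra.
From mathcomp Require Import all_classical all_reals all_analysis.
From mathcomp Require Import complex.

Set Implicit Arguments.
Unset Strict Implicit.
Unset Printing Implicit Defensive.

Import Order.TTheory GRing.Theory Num.Theory.

Local Open Scope ring_scope.

(* An n-qubit Pauli string: a label in 'I_4 for each qubit, with the        *)
(* convention 0 = I, 1 = X, 2 = Y, 3 = Z.                                    *)
Definition pauli (n : nat) := {ffun 'I_n -> 'I_4}.

Section Quantum.
Variable R : realType.
Local Notation C := (R[i]).

(* Entry (x, y) of the single-qubit Pauli matrix with label a,              *)
(* with the computational basis |false> = |0>, |true> = |1>.                *)
Definition pauli1 (a : 'I_4) (x y : bool) : C :=
  match val a with
  | 0 => if x == y then 1 else 0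
  | 1 => if x == y then 0 else 1
  | 2 => if x == y then 0 else if x then 'i%C else - 'i%C
  | _ => if x == y then (if x then -1 else 1) else 0
  end.

(* q-th bit of the basis index a of (C^2)^{\otimes n}.                      *)
Definition qbit (q a : nat) : bool := odd (a %/ 2 ^ q).

(* The 2^n x 2^n matrix of a Pauli string (tensor product of the           *)
(* single-qubit Pauli matrices, written entrywise).                          *)
Definition pauli_mx (n : nat) (P : pauli n) : 'M[C]_(2 ^ n) :=
  \matrix_(a, b) \prod_(q < n) pauli1 (P q) (qbit q a) (qbit q b).

Definition pcommute (n : nat) (P Q : pauli n) : Prop :=
  pauli_mx P *m pauli_mx Q = pauli_mx Q *m pauli_mx P.

Definition dagger (k l : nat) (A : 'M[C]_(k, l)) : 'M[C]_(l, k) :=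
  (map_mx (fun z : C => (z^*)%C) A)^T.

Definition is_state (n : nat) (psi : 'cV[C]_(2 ^ n)) : Prop :=
  (dagger psi *m psi) ord0 ord0 = 1.

Definition qexpect (n : nat) (psi : 'cV[C]_(2 ^ n)) (A : 'M[C]_(2 ^ n)) : C :=
  (dagger psi *m A *m psi) ord0 ord0.

Definition pexp (n : nat) (psi : 'cV[C]_(2 ^ n)) (P : pauli n) : C :=
  qexpect psi (pauli_mx P).

Definition psigma2 (n : nat) (psi : 'cV[C]_(2 ^ n)) (P : pauli n) : C :=
  1 - pexp psi P ^+ 2.

(* sigma_{PQ} = <PQ> - <P><Q>  (for commuting P, Q) *)
Definition psigma (n : nat) (psi : 'cV[C]_(2 ^ n)) (P Q : pauli n) : C :=
  qexpect psi (pauli_mx P *m pauli_mx Q) - pexp psi P * pexp psi Q.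

End Quantum.

(* Groupings.  The Hamiltonian H = sum_i c_i P_i is given by P : 'I_N ->    *)
(* pauli n (injective: distinct strings) and c : 'I_N -> R (nonzero).       *)
(* A group is represented by the set of indices of its operators.           *)

Definition commuting_set (R : realType) (n N : nat) (P : 'I_N -> pauli n)
    (S : {set 'I_N}) : Prop :=
  forall i k, i \in S -> k \in S -> pcommute R (P i) (P k).

Definition is_overlapped_grouping (R : realType) (n N m : nat)
    (P : 'I_N -> pauli n) (G : 'I_m -> {set 'I_N}) : Prop :=
  (forall j, commuting_set R P (G j)) /\ (forall i, exists j, i \in G j).

Definition is_grouping (R : realType) (n N m : nat)
    (P : 'I_N -> pauli n) (G : 'I_m -> {set 'I_N}) : Prop :=
  is_overlapped_grouping R P G /\
  (forall j j', j != j' -> [disjoint G j & G j']).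

Definition is_repacking (R : realType) (n N m : nat) (P : 'I_N -> pauli n)
    (G G' : 'I_m -> {set 'I_N}) : Prop :=
  is_overlapped_grouping R P G' /\ (forall j, G j \subset G' j).

(* Measurement model.  X j t i is the (+-1) outcome of operator P_i in shot *)
(* t < M j of group j (meaningful only when i \in G j).                     *)

Section Model.
Local Open Scope classical_set_scope.
Variables (R : realType) (n N m : nat).
Variables (d : measure_display) (T : measurableType d) (Pr : probability T R).

Definition shot_event (G : 'I_m -> {set 'I_N})
    (X : 'I_m -> nat -> 'I_N -> {RV Pr >-> R}) (k : 'I_m * nat)
    (B : 'I_N -> set R) : set T :=
  [set w | forall i, i \in G k.1 -> B i (X k.1 k.2 i w)].

(* Mutual independence of the shots (each shot being the random vector of   *)
(* the outcomes of all operators of its group): for any finitely many       *)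
(* distinct shots and any Borel sets, the joint probability factorizes.     *)
Definition shots_independent (G : 'I_m -> {set 'I_N}) (M : 'I_m -> nat)
    (X : 'I_m -> nat -> 'I_N -> {RV Pr >-> R}) : Prop :=
  forall (s : seq ('I_m * nat)) (B : 'I_m * nat -> 'I_N -> set R),
    uniq s -> (forall k, k \in s -> (k.2 < M k.1)%N) ->
    (forall k i, measurable (B k i)) ->
    Pr (\big[setI/setT]_(k <- s) shot_event G X k (B k)) =
    (\prod_(k <- s) Pr (shot_event G X k (B k)))%E.

Definition measurement_model (psi : 'cV[R[i]]_(2 ^ n)) (P : 'I_N -> pauli n)
    (G : 'I_m -> {set 'I_N}) (M : 'I_m -> nat)
    (X : 'I_m -> nat -> 'I_N -> {RV Pr >-> R}) : Prop :=
  [/\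
      (forall j t i, (t < M j)%N -> i \in G j ->
         forall w, X j t i w = 1 \/ X j t i w = -1),
      (forall j t i, (t < M j)%N -> i \in G j ->
         ('E_Pr[X j t i] = (complex.Re (pexp psi (P i)))%:E)%E),
      (forall j t i, (t < M j)%N -> i \in G j ->
         ('V_Pr[X j t i] = (complex.Re (psigma2 psi (P i)))%:E)%E),
      (forall j t i k, (t < M j)%N -> i \in G j -> k \in G j -> i != k ->
         covariance Pr (X j t i) (X j t k) =
         (complex.Re (psigma psi (P i) (P k)))%:E) &
      shots_independent G M X].

Definition Gamma (G : 'I_m -> {set 'I_N}) (i : 'I_N) : {set 'I_m} :=
  [set j | i \in G j].

Definition sample_mean (M : 'I_m -> nat)
    (X : 'I_m -> nat -> 'I_N -> {RV Pr >-> R}) (j : 'I_m) (i : 'I_N) : T -> R :=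
  fun w => (M j)%:R^-1 * \sum_(t < M j) X j t i w.

Definition estimator (c : 'I_N -> R) (G : 'I_m -> {set 'I_N})
    (M : 'I_m -> nat) (X : 'I_m -> nat -> 'I_N -> {RV Pr >-> R}) : T -> R :=
  fun w => \sum_(i < N) c i *
    \sum_(j in Gamma G i)
      ((M j)%:R / \sum_(k in Gamma G i) (M k)%:R) * sample_mean M X j i w.

End Model.

(* Main.v *)
Require Import Defs.
From HB Require Import structures.
From mathcomp Require Import all_boot all_order all_algebra.
From mathcomp Require Import all_classical all_reals all_analysis.
From mathcomp Require Import complex.
From mathcomp Require Import lra ring.

Import Order.TTheory GRing.Theory Num.Theory.
Local Open Scope classical_set_scope.
Local Open Scope ring_scope.

Section Gen.
Context d (T : measurableType d) (R : realType) (P : probability T R).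
Local Open Scope ereal_scope.

Lemma Lfun_pm1 (f : T -> R) (r : R) : measurable_fun setT f ->
  (forall w, (`|f w| = 1)%R) -> f \in Lfun P r%:E.
Proof.
move=> mf f1.
have := Lfun_cst P 1%R r.
rewrite !inE/= => /andP[_ H]; apply/andP; split; first by rewrite inE.
move: H; rewrite !inE /finite_norm unlock /=.
suff -> : (fun x => (`|f x| `^ r)%:E) = (fun _ => (`|1%R| `^ r)%:E) by [].
by apply/funext => x; rewrite f1 normr1.
Qed.

Lemma cov_sum_r (K : eqType) (X : T -> R) (F : K -> T -> R) (s : seq K) :
  X \in Lfun P 2%:E -> (forall k, k \in s -> F k \in Lfun P 2%:E) ->
  covariance P X (\sum_(k <- s) F k)%R = \sum_(k <- s) covariance P X (F k).
Proof.
move=> X2; elim: s => [|a s IH] Fs.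
  by rewrite !big_nil covariance_cst_r.
have Fs' : forall k, k \in s -> F k \in Lfun P 2%:E.
  by move=> k ks; apply: Fs; rewrite inE ks orbT.
rewrite !big_cons covarianceDr //.
- by rewrite IH.
- by apply: Fs; rewrite mem_head.
- rewrite big_seq; apply: rpred_sum; first exact: lee1n.
  move=> ? k ks; exact: Fs'.
Qed.

Lemma var_sum (K : eqType) (F : K -> T -> R) (s : seq K) : uniq s ->
  (forall k, k \in s -> F k \in Lfun P 2%:E) ->
  (forall k l, k \in s -> l \in s -> k != l -> covariance P (F k) (F l) = 0) ->
  'V_P[(\sum_(k <- s) F k)%R] = \sum_(k <- s) 'V_P[F k].
Proof.
elim: s => [|a s IH] us Fs Fc.
  by rewrite !big_nil variance_cst.
move: us => /= /andP[as_ us].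
have Fs' : forall k, k \in s -> F k \in Lfun P 2%:E.
  by move=> k ks; apply: Fs; rewrite inE ks orbT.
have S2 : (\sum_(k <- s) F k)%R \in Lfun P 2%:E.
  rewrite big_seq; apply: rpred_sum; first exact: lee1n.
  move=> ? k ks; exact: Fs'.
rewrite !big_cons varianceD //; last by apply: Fs; rewrite mem_head.
rewrite IH //; last by move=> k l ks ls kl; apply: Fc; rewrite // inE ?ks ?ls orbT.
rewrite cov_sum_r //; last by apply: Fs; rewrite mem_head.
have -> : \sum_(k <- s) covariance P (F a) (F k) = 0.
  rewrite big1_seq // => k /andP[_ ks].
  apply: Fc; rewrite ?mem_head ?inE ?ks ?orbT //.
  by apply: contraNneq as_ => ->.
by rewrite mule0 adde0.
Qed.
End Gen.


Section Gen2.
Context d (T : measurableType d) (R : realType) (P : probability T R).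

Lemma indic_pre_val (X : T -> R) w : (X w = 1 \/ X w = -1) ->
  (\1_(X @^-1` [set 1]) w : R) = 2^-1 * (X w + 1).
Proof.
rewrite indicE => -[] Xw.
  rewrite mem_set /=; last by rewrite /preimage /= Xw.
  by rewrite Xw; field.
rewrite memNset /=; first by rewrite Xw; field.
rewrite /preimage /= Xw => /eqP; rewrite -subr_eq0; lra.
Qed.

Lemma pm1_indic (X : T -> R) : (forall w, X w = 1 \/ X w = -1) ->
  X = (2%R \o* \1_(X @^-1` [set 1%R]) \- cst 1%R).
Proof.
move=> Xpm; apply/funext => w /=; by rewrite indic_pre_val //; field.
Qed.

Lemma measurable_pre (X : T -> R) (B : set R) : measurable_fun setT X ->
  measurable B -> measurable (X @^-1` B).
Proof. by move=> mX mB; rewrite -[X @^-1` B]setTI; exact: mX. Qed.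

Lemma Lfun_pm1' (X : T -> R) (r : R) : measurable_fun setT X ->
  (forall w, X w = 1 \/ X w = -1) -> X \in Lfun P r%:E.
Proof.
move=> mX Xpm; apply: Lfun_pm1 => // w; case: (Xpm w) => ->; by rewrite ?normrN normr1.
Qed.

Lemma Lfun_indic_pm1 (X : T -> R) : measurable_fun setT X ->
  (forall w, X w = 1 \/ X w = -1) -> (\1_(X @^-1` [set 1]) : T -> R) \in Lfun P 2%:E.
Proof.
move=> mX Xpm.
have -> : (\1_(X @^-1` [set 1]) : T -> R) = (2^-1 \o* (X \+ cst 1)).
  by apply/funext => w /=; rewrite (indic_pre_val _ _ (Xpm w)) mulrC.
rewrite Lfun_scale ?ler1n // rpredD ?Lfun_cst //; first exact: lee1n.
  move=> ?; exact: Lfun_pm1'.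
by move=> ?; exact: Lfun_cst.
Qed.

Lemma cov_indep_pm1 (X Y : T -> R) :
  measurable_fun setT X -> measurable_fun setT Y ->
  (forall w, X w = 1 \/ X w = -1) -> (forall w, Y w = 1 \/ Y w = -1) ->
  P (X @^-1` [set 1%R] `&` Y @^-1` [set 1%R]) =
    (P (X @^-1` [set 1%R]) * P (Y @^-1` [set 1%R]))%E ->
  covariance P X Y = 0%E.
Proof.
move=> mX mY Xpm Ypm indep.
have mA : measurable (X @^-1` [set 1]) by apply: measurable_pre.
have mB : measurable (Y @^-1` [set 1]) by apply: measurable_pre.
have U2 := Lfun_indic_pm1 X mX Xpm.
have V2 := Lfun_indic_pm1 Y mY Ypm.
set A := X @^-1` [set 1] in mA U2 indep *.
set B := Y @^-1` [set 1] in mB V2 indep *.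
have Pfin : P setT \is a fin_num := fin_num_measure P _ measurableT.
have U1 := Lfun_subset12 Pfin U2.
have V1 := Lfun_subset12 Pfin V2.
have UV1 := Lfun2_mul_Lfun1 U2 V2.
rewrite (pm1_indic X Xpm) (pm1_indic Y Ypm) -/A -/B.
have c2 : forall (r : R), cst r \in Lfun P 2%:E by move=> r; exact: Lfun_cst.
have sU2 : (2 \o* \1_A : T -> R) \in Lfun P 2%:E by rewrite Lfun_scale ?ler1n.
have sV2 : (2 \o* \1_B : T -> R) \in Lfun P 2%:E by rewrite Lfun_scale ?ler1n.
have sV2' : (2 \o* \1_B \- cst 1 : T -> R) \in Lfun P 2%:E.
  by rewrite rpredB //; exact: lee1n.
rewrite covarianceBl // covariance_cst_l sube0.
rewrite covarianceBr // covariance_cst_r sube0.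
have sV1 := Lfun_subset12 Pfin sV2.
rewrite covarianceZl //; last exact: Lfun2_mul_Lfun1.
rewrite covarianceZr //.
rewrite covarianceE //.
have -> : (\1_A * \1_B : T -> R) = \1_(A `&` B) by rewrite indicI.
rewrite !expectation_indic //; last exact: measurableI.
rewrite indep subee ?mule0 //.
by rewrite fin_numM // fin_num_measure.
Qed.
End Gen2.


Definition kpred (N m Mx : nat) (Gm : 'I_N -> {set 'I_m}) (M : 'I_m -> nat)
  (k : 'I_N * ('I_m * 'I_Mx)) : bool := (k.2.1 \in Gm k.1) && (k.2.2 < M k.2.1)%N.

Definition kseq (N m Mx : nat) (Gm : 'I_N -> {set 'I_m}) (M : 'I_m -> nat) :=
  [seq k <- index_enum ('I_N * ('I_m * 'I_Mx))%type | @kpred N m Mx Gm M k].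

Lemma flat_sum (V : nmodType) (N m Mx : nat) (Gm : 'I_N -> {set 'I_m}) (M : 'I_m -> nat)
  (g : 'I_N -> 'I_m -> nat -> V) : (forall j, M j <= Mx)%N ->
  \sum_(k <- @kseq N m Mx Gm M) g k.1 k.2.1 k.2.2 =
  \sum_(i < N) \sum_(j in Gm i) \sum_(t < M j) g i j t.
Proof.
move=> hM; rewrite /kseq big_filter.
transitivity (\sum_(i < N) \sum_(j in Gm i) \sum_(t < Mx | (t < M j)%N) g i j t); last first.
  apply: eq_bigr => i _; apply: eq_bigr => j _.
  by rewrite (big_ord_widen _ (fun t => g i j t) (hM j)).
under [RHS]eq_bigr => i _ do rewrite pair_big_dep.
rewrite pair_big_dep.
by apply: eq_bigl => -[i [j t]].
Qed.


Lemma cov_X_zero (R : realType) (n N m : nat) (P : 'I_N -> pauli n)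
  (psi : 'cV[R[i]]_(2 ^ n)) (G0 : 'I_m -> {set 'I_N}) (M : 'I_m -> nat)
  (d : measure_display) (T : measurableType d) (Pr : probability T R)
  (X : 'I_m -> nat -> 'I_N -> {RV Pr >-> R}) :
  is_overlapped_grouping R P G0 ->
  (forall i k, i != k -> pcommute R (P i) (P k) -> psigma psi (P i) (P k) = 0) ->
  measurement_model psi P G0 M X ->
  forall j t i j' t' i', (t < M j)%N -> (t' < M j')%N -> i \in G0 j -> i' \in G0 j' ->
  (j, t, i) != (j', t', i') ->
  covariance Pr (X j t i) (X j' t' i') = 0%E.
Proof.
move=> [comm cover] hz [hpm hE hV hC hind] j t i j' t' i' ht ht' hi hi' hne.
case: (eqVneq (j, t) (j', t')) => [[ej et] | jtne].
  subst j' t'.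
  have ii : i != i' by apply: contraNneq hne => ->.
  by rewrite hC // hz //; exact: (comm j i i' hi hi').
apply: cov_indep_pm1.
- exact: measurable_funPT.
- exact: measurable_funPT.
- exact: hpm.
- exact: hpm.
pose B := fun (kk : 'I_m * nat) (ii : 'I_N) =>
  if (kk == (j, t)) && (ii == i) then [set 1%R]
  else if (kk == (j', t')) && (ii == i') then [set 1%R] else [set: R].
have := hind [:: (j, t); (j', t')] B.
rewrite /= inE jtne /= => /(_ isT).
rewrite !big_cons !big_nil setIT mule1.
have -> : shot_event G0 X (j, t) (B (j, t)) = X j t i @^-1` [set 1%R].
  apply/funext => w; apply/propext; rewrite /shot_event /preimage /=; split.
    by move=> /(_ i hi); rewrite /B !eqxx.
  move=> Xw ii iin; rewrite /B eqxx /=.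
  case: eqP => [->//|_]; by rewrite (negbTE jtne).
have -> : shot_event G0 X (j', t') (B (j', t')) = X j' t' i' @^-1` [set 1%R].
  apply/funext => w; apply/propext; rewrite /shot_event /preimage /=; split.
    by move=> /(_ i' hi'); rewrite /B eq_sym (negbTE jtne) !eqxx.
  move=> Xw ii iin; rewrite /B eqxx /= eq_sym (negbTE jtne) /=.
  by case: eqP => [->//|_].
apply.
- move=> k; rewrite !inE => /orP[] /eqP -> //.
- move=> k ii; rewrite /B.
  case: ifP => _; first exact: measurable_set1.
  case: ifP => _; first exact: measurable_set1.
  exact: measurableT.
Qed.


Lemma var_est (R : realType) (n N m : nat) (P : 'I_N -> pauli n) (c : 'I_N -> R)
  (psi : 'cV[R[i]]_(2 ^ n)) (G0 : 'I_m -> {set 'I_N}) (M : 'I_m -> nat)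
  (d : measure_display) (T : measurableType d) (Pr : probability T R)
  (X : 'I_m -> nat -> 'I_N -> {RV Pr >-> R}) :
  is_overlapped_grouping R P G0 ->
  (forall i k, i != k -> pcommute R (P i) (P k) -> psigma psi (P i) (P k) = 0) ->
  (forall j, (0 < M j)%N) ->
  measurement_model psi P G0 M X ->
  'V_Pr[estimator c G0 M X] =
  (\sum_(i < N) c i ^+ 2 * complex.Re (psigma2 psi (P i)) /
      \sum_(k in Gamma G0 i) (M k)%:R)%:E.
Proof.
move=> og hz Mpos mm.
have [comm cover] := og.
have [hpm hE hV hC hind] := mm.
pose Mx := (\max_(j < m) M j).+1.
have hM : forall j, (M j <= Mx)%N by move=> j; apply: leqW; exact: leq_bigmax.
pose S i := \sum_(k in Gamma G0 i) (M k)%:R : R.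
have Spos : forall i, 0 < S i.
  move=> i; have [j ij] := cover i.
  rewrite /S (bigD1 j) /=; last by rewrite inE.
  have : 0 <= \sum_(k in Gamma G0 i | k != j) (M k)%:R :> R by apply: sumr_ge0.
  have : 0 < (M j)%:R :> R by rewrite ltr0n.
  lra.
pose F (k : 'I_N * ('I_m * 'I_Mx)) := ((c k.1 / S k.1) \o* (X k.2.1 k.2.2 k.1 : T -> R)).
have Eeq : estimator c G0 M X = (\sum_(k <- @kseq N m Mx (Gamma G0) M) F k)%R.
  apply/funext => w; rewrite fct_sumE /F /=.
  rewrite (@flat_sum _ N m Mx (Gamma G0) M (fun i j t => X j t i w * (c i / S i)) hM).
  rewrite /estimator /sample_mean; apply: eq_bigr => i _.
  rewrite mulr_sumr; apply: eq_bigr => j ji.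
  rewrite -mulr_suml.
  have : (M j)%:R != 0 :> R by rewrite pnatr_eq0 -lt0n.
  have : S i != 0 by rewrite gt_eqF.
  by rewrite /S => h1 h2; field; apply/andP; split.
have XL2 : forall j t i, (t < M j)%N -> i \in G0 j ->
    (X j t i : T -> R) \in Lfun Pr 2%:E.
  move=> j t i tj ij; apply: Lfun_pm1'; first exact: measurable_funPT.
  by move=> w; apply: hpm.
have Pfin : Pr setT \is a fin_num := fin_num_measure Pr _ measurableT.
have kP : forall k, k \in @kseq N m Mx (Gamma G0) M ->
    (val k.2.2 < M k.2.1)%N /\ k.1 \in G0 k.2.1.
  move=> [i [j t]]; rewrite /kseq mem_filter /kpred /= /Gamma inE.
  by case/andP => /andP[-> ->].
have FL2 : forall k, k \in @kseq N m Mx (Gamma G0) M -> F k \in Lfun Pr 2%:E.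
  move=> k /kP [h1 h2]; rewrite /F Lfun_scale //; first exact: ler1n.
  exact: XL2.
rewrite Eeq var_sum //; first last.
- move=> [i [j t]] [i' [j' t']] /kP [/= ht hi] /kP [/= ht' hi'] kl.
  have X1 := Lfun_subset12 Pfin (XL2 _ _ _ ht hi).
  have X2 := XL2 _ _ _ ht' hi'.
  have X1' := Lfun_subset12 Pfin X2.
  rewrite /F /= covarianceZl //; first last.
  + by apply: Lfun2_mul_Lfun1; [exact: XL2 | rewrite Lfun_scale //; exact: ler1n].
  + by apply: Lfun_subset12 => //; rewrite Lfun_scale //; exact: ler1n.
  rewrite covarianceZr //; last by apply: Lfun2_mul_Lfun1 => //; exact: XL2.
  rewrite (@cov_X_zero _ _ _ _ _ _ _ _ _ _ _ _ og hz mm _ _ _ _ _ _ ht ht' hi hi') ?mule0 //.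
  apply: contra kl => /eqP [ej et ei]; subst j' i'.
  by apply/eqP; congr (_, (_, _)); apply: val_inj.
- exact: filter_uniq (index_enum_uniq _).
pose sig i := complex.Re (psigma2 psi (P i)).
rewrite (eq_big_seq (fun k => ((c k.1 / S k.1) ^+ 2 * sig k.1)%:E)); last first.
  move=> [i [j t]] /kP [/= ht hi].
  by rewrite /F varianceZ; [rewrite hV | exact: XL2].
rewrite sumEFin; congr (_%:E).
rewrite (@flat_sum _ N m Mx (Gamma G0) M (fun i j t => (c i / S i) ^+ 2 * sig i) hM).
apply: eq_bigr => i _.
under eq_bigr => j _ do rewrite sumr_const card_ord -mulr_natr.
rewrite -mulr_sumr -/(S i).
have : S i != 0 by rewrite gt_eqF.
by move=> h; rewrite /sig; field.
Qed.


Theorem theorem2 (R : realType) (n N m : nat)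
  (P : 'I_N -> pauli n) (c : 'I_N -> R) (psi : 'cV[R[i]]_(2 ^ n))
  (G G' : 'I_m -> {set 'I_N}) (M : 'I_m -> nat)
  (d1 : measure_display) (T1 : measurableType d1) (Pr1 : probability T1 R)
  (X1 : 'I_m -> nat -> 'I_N -> {RV Pr1 >-> R})
  (d2 : measure_display) (T2 : measurableType d2) (Pr2 : probability T2 R)
  (X2 : 'I_m -> nat -> 'I_N -> {RV Pr2 >-> R}) :
  injective P ->
  (forall i, c i != 0) ->
  is_state psi ->
  is_grouping R P G ->
  is_repacking R P G G' ->
  (forall i k, i != k -> pcommute R (P i) (P k) ->
     psigma psi (P i) (P k) = 0) ->
  (forall j, (0 < M j)%N) ->
  measurement_model psi P G M X1 ->
  measurement_model psi P G' M X2 ->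
  (exists j s, [/\ s \in G' j, s \notin G j & 0 < psigma2 psi (P s)]) ->
  ('V_Pr2[estimator c G' M X2] < 'V_Pr1[estimator c G M X1])%E.
Proof.
move=> _ cnz _ [og _] [og' sub] hz Mpos mm1 mm2 [j0 [s [s'j s'nj sigpos]]].
rewrite (@var_est _ _ _ _ _ c _ _ _ _ _ _ _ og hz Mpos mm1).
rewrite (@var_est _ _ _ _ _ c _ _ _ _ _ _ _ og' hz Mpos mm2) lte_fin.
have [_ cover] := og.
have [hpm hE hV hC hind] := mm1.
pose sig i := complex.Re (psigma2 psi (P i)).
have sig0 : forall i, 0 <= sig i.
  move=> i; have [j ij] := cover i.
  have := variance_ge0 Pr1 (X1 j 0 i).
  by rewrite hV // lee_fin.
have sigs : 0 < sig s.
  by move: sigpos; rewrite ltcE => /andP[_].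
pose S (G0 : 'I_m -> {set 'I_N}) i := \sum_(k in Gamma G0 i) (M k)%:R : R.
have Spos : forall i, 0 < S G i.
  move=> i; have [j ij] := cover i.
  rewrite /S (bigD1 j) /=; last by rewrite inE.
  have : 0 <= \sum_(k in Gamma G i | k != j) (M k)%:R :> R by apply: sumr_ge0.
  have : 0 < (M j)%:R :> R by rewrite ltr0n.
  lra.
have SS : forall i, S G i <= S G' i.
  move=> i; rewrite /S [X in X <= _]big_mkcond [X in _ <= X]big_mkcond /=.
  apply: ler_sum => k _; rewrite !inE.
  case: ifP => h; first by rewrite ((fintype.subsetP (sub k)) _ h).
  by case: ifP.
have SSs : S G s < S G' s.
  rewrite /S [X in X < _]big_mkcond [X in _ < X]big_mkcond /=.
  rewrite (bigD1 j0) //= [X in _ < X](bigD1 j0) //= !inE (negbTE s'nj) s'j add0r.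
  have : \sum_(k < m | k != j0) (if k \in Gamma G s then (M k)%:R else 0) <=
         \sum_(k < m | k != j0) (if k \in Gamma G' s then (M k)%:R else 0) :> R.
    apply: ler_sum => k _; rewrite !inE.
    case: ifP => h; first by rewrite ((fintype.subsetP (sub k)) _ h).
    by case: ifP.
  have : 0 < (M j0)%:R :> R by rewrite ltr0n.
  lra.
rewrite (bigD1 s) //= [X in _ < X](bigD1 s) //=.
apply: ltr_leD.
  rewrite ltr_pM2l; last first.
    by rewrite mulr_gt0 // exprn_even_gt0 // cnz.
  have h1 := Spos s; have h2 := SSs.
  rewrite ltf_pV2 ?posrE //.
  exact: lt_le_trans h1 (SS s).
apply: ler_sum => i _.
rewrite ler_wpM2l //; first exact: mulr_ge0 (sqr_ge0 _) (sig0 i).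
have h1 := Spos i; have h2 := SS i.
rewrite lef_pV2 ?posrE //.
exact: lt_le_trans h1 h2.
Qed.
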